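(* Let $f_{r,k}(x)=x^2\exp(r-x)+k$. For every $k\in[0,2)$ there exists an interval $[r_1,r_2]$ of positive $r$-values such that for every $r\in[r_1,r_2]$ the map $f_{r,k}$ has an attracting fixed point $x_f>2$. *)

(* Defs.v *)
From Stdlib Require Import Reals.
Open Scope R_scope.

Definition f_rk (r k : R) (x : R) : R := x ^ 2 * exp (r - x) + k.

Definition attracting_fixed_point (g : R -> R) (x : R) : Prop :=
  g x = x /\ exists d : R, derivable_pt_lim g x d /\ Rabs d < 1.

(* Main.v *)
Require Import Defs.
From Stdlib Require Import Reals.
Open Scope R_scope.
From Stdlib Require Import Lra Psatz.
From Coquelicot Require Import Coquelicot.

Lemma exp28 : 98/10 < exp (28/10).
Proof.
  assert (h1 : 1 + 35/100 < exp (35/100)) by (apply exp_ineq1; lra).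
  assert (e7 : exp (7/10) = exp (35/100) * exp (35/100)) by (rewrite <- exp_plus; f_equal; lra).
  assert (e14 : exp (14/10) = exp (7/10) * exp (7/10)) by (rewrite <- exp_plus; f_equal; lra).
  assert (e28 : exp (28/10) = exp (14/10) * exp (14/10)) by (rewrite <- exp_plus; f_equal; lra).
  assert (h2 : 18/10 < exp (7/10)) by (rewrite e7; nra).
  assert (h3 : 33/10 < exp (14/10)) by (rewrite e14; nra).
  rewrite e28; nra.
Qed.

Lemma deriv_f (r k x : R) :
  derivable_pt_lim (f_rk r k) x ((2*x - x^2) * exp (r - x)).
Proof.
  apply is_derive_Reals. unfold f_rk.
  auto_derive; auto. unfold Rminus; ring.
Qed.

Lemma exp_le x y : x <= y -> exp x <= exp y.
Proof. intros [h|h]. left; apply exp_increasing; auto. subst; lra. Qed.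

Theorem corollary3p5 :
  forall k : R, 0 <= k < 2 ->
  exists r1 r2 : R, 0 < r1 /\ r1 < r2 /\
    forall r : R, r1 <= r <= r2 ->
      exists xf : R, 2 < xf /\ attracting_fixed_point (f_rk r k) xf.
Proof.
  intros k [k0 k2].
  set (a := 28/10). set (b := 29/10).
  set (p := (a - k) / a^2). set (q := (b - k) / b^2).
  assert (pp : 0 < p) by (unfold p, a; apply Rdiv_lt_0_compat; nra).
  assert (qp : 0 < q) by (unfold q, b; apply Rdiv_lt_0_compat; nra).
  exists (a + ln p), (b + ln q).
  assert (ea : exp (a + ln p) = exp a * p) by (rewrite exp_plus, exp_ln; auto).
  assert (eb : exp (b + ln q) = exp b * q) by (rewrite exp_plus, exp_ln; auto).
  assert (eab : exp b = exp a * exp (1/10)) by (rewrite <- exp_plus; f_equal; unfold a, b; lra).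
  assert (e01 : 1 + 1/10 < exp (1/10)) by (apply exp_ineq1; lra).
  assert (hexa := exp28). fold a in hexa.
  assert (epa : 0 < exp a) by apply exp_pos.
  split; [|split].
  - apply exp_lt_inv. rewrite ea, exp_0. unfold p.
    apply Rmult_lt_reg_r with (a^2). unfold a; nra.
    unfold Rdiv. rewrite Rmult_assoc, Rmult_assoc, Rinv_l by (unfold a; nra).
    unfold a in *; nra.
  - apply exp_lt_inv. rewrite ea, eb, eab.
    assert (p < q * 11/10).
    { unfold p, q, a, b. apply Rmult_lt_reg_r with ((28/10)^2 * (29/10)^2). nra.
      field_simplify; nra. }
    clearbody a b p q.
    assert (exp a * p < exp a * (q * 11/10)) by (apply Rmult_lt_compat_l; auto).
    assert (exp a * q * (11/10) < exp a * q * exp (1/10)) by (apply Rmult_lt_compat_l; nra).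
    nra.
  - intros r [hr1 hr2].
    set (g := fun x => x^2 * exp (r - x) + k - x).
    assert (cg : continuity g).
    { intro x. apply derivable_continuous_pt. unfold g.
      exists ((2*x - x^2) * exp (r - x) - 1).
      apply is_derive_Reals. auto_derive; auto. unfold Rminus; ring. }
    assert (ga : 0 <= g a).
    { unfold g. assert (h : exp (ln p) <= exp (r - a)) by (apply exp_le; lra).
      rewrite exp_ln in h by auto. unfold p in h.
      assert (a^2 * ((a-k)/a^2) = a - k) by (field; unfold a; lra).
      assert (0 < a^2) by (unfold a; lra). nra. }
    assert (gb : g b <= 0).
    { unfold g. assert (h : exp (r - b) <= exp (ln q)) by (apply exp_le; lra).
      rewrite exp_ln in h by auto. unfold q in h.
      assert (b^2 * ((b-k)/b^2) = b - k) by (field; unfold b; lra).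
      assert (0 < b^2) by (unfold b; lra). nra. }
    destruct (IVT_cor g a b cg ltac:(unfold a, b; lra) ltac:(nra)) as [z [[za zb] gz]].
    exists z. split. unfold a in za; lra.
    unfold g in gz. split. unfold f_rk; lra.
    exists ((2*z - z^2) * exp (r - z)). split. apply deriv_f.
    assert (E := exp_pos (r - z)). set (e := exp (r - z)) in *.
    unfold a, b in za, zb.
    assert (hz : z^2 * e = z - k) by lra.
    apply Rabs_def1.
    + assert (2 * z * e < z^2 * e) by (apply Rmult_lt_compat_r; nra). nra.
    + assert (z * (2 * z * e - z^2 * e) > -z) by nra. nra.
Qed.
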